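(* For every history formula $\varphi$ of CTL*KΔ, every model $M$, every history $h$ of $M$ and every observation record $r$ that stops at $h$: $$h,r\models\varphi\quad\text{iff}\quad \mathit{last}(h),\ \mathit{IS}(h,r),\ o(h,r)\models_I\varphi.$$
   Context: Fix a countably infinite set $\mathit{AP}$ of atomic propositions and a finite nonempty set $\mathit{Obs}$ of observations. For a word $w$ we write $w_i$ for its letter at position $i$ (positions start at $0$), $w_{\le i}$ for its prefix ending at position $i$, $w_{\ge i}$ for its suffix starting at position $i$, $|w|$ for the length of a finite word, and $\mathit{last}(w)$ for the last letter of a finite word; $w\preceq w'$ means $w$ is a prefix of $w'$. Syntax of CTL*KΔ (single agent): history formulas $\varphi::=p\mid\neg\varphi\mid\varphi\wedge\varphi\mid\mathbf A\psi\mid\mathbf K\varphi\mid\Delta^{o}\varphi$ and path formulas $\psi::=\varphi\mid\neg\psi\mid\psi\wedge\psi\mid\mathbf X\psi\mid\psi\,\mathbf U\,\psi$, with $p\in\mathit{AP}$ and $o\in\mathit{Obs}$; the formulas of the logic are the history formulas. A model is $M=(\mathit{AP}_f,S,T,V,\{\sim_o\}_{o\in\mathit{Obs}},s_\iota,o_\iota)$ where $\mathit{AP}_f\subseteq\mathit{AP}$ is finite, $S$ is a finite set of states, $T\subseteq S\times S$ is left-total, $V:S\to 2^{\mathit{AP}_f}$, each $\sim_o$ is an equivalence relation on $S$, $s_\iota\in S$ and $o_\iota\in\mathit{Obs}$. A path is an infinite sequence $\pi=s_0s_1\dots$ of states with $s_i\,T\,s_{i+1}$ for all $i$ (starting at any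 state); a history is a finite nonempty prefix of a path. An observation record is a finite word over $\mathit{Obs}\times\mathbb N$; $\epsilon$ is the empty record, $r\cdot(o,n)$ is $r$ with $(o,n)$ appended, and $r_{=n}$ is the subword of $r$ consisting of the pairs whose second component is $n$. The record $r$ stops at $n$ if $r_{=m}$ is empty for all $m>n$, and stops at a history $h$ if it stops at $|h|-1$. The list $\mathit{ol}(r,n)$ is defined by $\mathit{ol}(r,0)=o_\iota\cdot o_1\cdots o_k$ if $r_{=0}=(o_1,0)\cdots(o_k,0)$, and $\mathit{ol}(r,n+1)=\mathit{last}(\mathit{ol}(r,n))\cdot o_1\cdots o_k$ if $r_{=n+1}=(o_1,n+1)\cdots(o_k,n+1)$. Two histories are equivalent, $h\approx_r h'$, if $|h|=|h'|$ and for every $i<|h|$ and every $o$ occurring in $\mathit{ol}(r,i)$, $h_i\sim_o h'_i$. Natural semantics: for a history $h$ and record $r$: $h,r\models p$ iff $p\in V(\mathit{last}(h))$; $h,r\models\neg\varphi$ iff not $h,r\models\varphi$; $h,r\models\varphi_1\wedge\varphi_2$ iff both hold; $h,r\models\mathbf A\psi$ iff for all paths $\pi$ with $h\preceq\pi$, $\pi,|h|-1,r\models\psi$; $h,r\models\mathbf K\varphi$ iff $h',r\models\varphi$ for all histories $h'$ with $h'\approx_r h$; $h,r\models\Delta^o\varphi$ iff $h,r\cdot(o,|h|-1)\models\varphi$. For a path $\pi$, $n\in\mathbb N$ and record $r$: $\pi,n,r\models\varphi$ iff $\pi_{\le n},r\models\varphi$; negation and conjunction as usual; $\pi,n,r\models\mathbf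 X\psi$ iff $\pi,n+1,r\models\psi$; $\pi,n,r\models\psi_1\mathbf U\psi_2$ iff there is $m\ge n$ with $\pi,m,r\models\psi_2$ and $\pi,k,r\models\psi_1$ for all $n\le k<m$. For $I\subseteq S$, $T(I)=\{s'\mid\exists s\in I,\ s\,T\,s'\}$; $[s]_o=\{s'\mid s\sim_o s'\}$. The information set is $\mathit{IS}(h,r)=\{\mathit{last}(h')\mid h'\text{ a history with }h'\approx_r h\}$. Updates: $U_T(I,s',o)=T(I)\cap[s']_o$ and $U_\Delta(I,s,o')=I\cap[s]_{o'}$. $o(h,r)$ denotes the last element of $\mathit{ol}(r,|h|-1)$. Alternative semantics, for $s\in S$, $I\subseteq S$, $o\in\mathit{Obs}$: $s,I,o\models_I p$ iff $p\in V(s)$; negation and conjunction as usual; $s,I,o\models_I\mathbf A\psi$ iff for every path $\pi$ with $\pi_0=s$, $\pi,I,o\models_I\psi$; $s,I,o\models_I\mathbf K\varphi$ iff $s',I,o\models_I\varphi$ for all $s'\in I$; $s,I,o\models_I\Delta^{o'}\varphi$ iff $s,U_\Delta(I,s,o'),o'\models_I\varphi$. For a path $\pi$: $\pi,I,o\models_I\varphi$ iff $\pi_0,I,o\models_I\varphi$; negation and conjunction as usual; $\pi,I,o\models_I\mathbf X\psi$ iff $\pi_{\ge1},U_T(I,\pi_1,o),o\models_I\psi$; $\pi,I,o\models_I\psi_1\mathbf U\psi_2$ iff there is $n\ge0$ with $\pi_{\ge n},U_T^n(I,\pi,o),o\models_I\psi_2$ and $\pi_{\ge m},U_T^m(I,\pi,o),o\models_I\psi_1$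 for all $0\le m<n$, where $U_T^0(I,\pi,o)=I$ and $U_T^{n+1}(I,\pi,o)=U_T(U_T^n(I,\pi,o),\pi_{n+1},o)$. *)

(* Defs.v *)
From mathcomp Require Import all_boot.
Set Implicit Arguments. Unset Strict Implicit. Unset Printing Implicit Defensive.

(* Atomic propositions: AP := nat (countably infinite).
   Observations: a finite type Obs (nonempty since every model has o_init). *)

Record model (Obs : finType) := Model {
  APf : seq nat;
  St : finType;
  Tr : rel St;
  Tr_total : forall s, exists s', Tr s s';
  Val : St -> nat -> bool;
  Val_APf : forall s p, Val s p -> p \in APf;      (* V : S -> 2^{AP_f} *)
  sim : Obs -> rel St;
  sim_refl : forall o s, sim o s s;
  sim_sym : forall o s t, sim o s t -> sim o t s;
  sim_trans : forall o s t u, sim o s t -> sim o t u -> sim o s u;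
  s_init : St;
  o_init : Obs
}.
Arguments St {Obs}.
Arguments Tr {Obs} m.
Arguments Val {Obs} m.
Arguments sim {Obs} m.
Arguments s_init {Obs} m.
Arguments o_init {Obs} m.

Inductive hform (Obs : Type) : Type :=
  | HAtom : nat -> hform Obs
  | HNot : hform Obs -> hform Obs
  | HAnd : hform Obs -> hform Obs -> hform Obs
  | HA : pform Obs -> hform Obs
  | HK : hform Obs -> hform Obs
  | HDelta : Obs -> hform Obs -> hform Obs
with pform (Obs : Type) : Type :=
  | PH : hform Obs -> pform Obs
  | PNot : pform Obs -> pform Obs
  | PAnd : pform Obs -> pform Obs -> pform Obs
  | PX : pform Obs -> pform Obs
  | PU : pform Obs -> pform Obs -> pform Obs.

Section Semantics.
Variables (Obs : finType) (M : model Obs).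
Local Notation S := (St M).

(* Histories: finite nonempty T-sequences (= finite nonempty prefixes of paths,
   since T is left-total). Positions start at 0. *)
Definition hnth (h : seq S) (i : nat) : S := nth (s_init M) h i.
Definition hlast (h : seq S) : S := last (s_init M) h.

Definition is_history (h : seq S) : Prop :=
  h <> [::] /\ forall i, i.+1 < size h -> Tr M (hnth h i) (hnth h i.+1).

Definition is_path (pi : nat -> S) : Prop := forall i, Tr M (pi i) (pi i.+1).

Definition hprefix (h : seq S) (pi : nat -> S) : Prop :=
  forall i, i < size h -> pi i = hnth h i.

Definition prefix_upto (pi : nat -> S) (n : nat) : seq S := mkseq pi n.+1.

Definition suffix_from (pi : nat -> S) (n : nat) : nat -> S := fun i => pi (n + i).

Definition record := seq (Obs * nat).

Definition obs_at (r : record) (n : nat) : seq Obs :=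
  [seq x.1 | x <- r & x.2 == n].

Definition stops_at (r : record) (n : nat) : Prop :=
  forall m, n < m -> obs_at r m = [::].

Definition stops_at_hist (r : record) (h : seq S) : Prop :=
  stops_at r (size h).-1.

Fixpoint ol (r : record) (n : nat) : seq Obs :=
  match n with
  | 0 => o_init M :: obs_at r 0
  | n'.+1 => last (o_init M) (ol r n') :: obs_at r n
  end.

Definition hequiv (r : record) (h h' : seq S) : Prop :=
  size h = size h' /\
  forall i, i < size h -> forall o, o \in ol r i -> sim M o (hnth h i) (hnth h' i).

Fixpoint hsat (h : seq S) (r : record) (phi : hform Obs) {struct phi} : Prop :=
  match phi with
  | HAtom p => Val M (hlast h) p
  | HNot phi1 => ~ hsat h r phi1
  | HAnd phi1 phi2 => hsat h r phi1 /\ hsat h r phi2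
  | HA psi => forall pi, is_path pi -> hprefix h pi -> psat pi (size h).-1 r psi
  | HK phi1 => forall h', is_history h' -> hequiv r h' h -> hsat h' r phi1
  | HDelta o phi1 => hsat h (rcons r (o, (size h).-1)) phi1
  end
with psat (pi : nat -> S) (n : nat) (r : record) (psi : pform Obs) {struct psi} : Prop :=
  match psi with
  | PH phi => hsat (prefix_upto pi n) r phi
  | PNot psi1 => ~ psat pi n r psi1
  | PAnd psi1 psi2 => psat pi n r psi1 /\ psat pi n r psi2
  | PX psi1 => psat pi n.+1 r psi1
  | PU psi1 psi2 => exists m, n <= m /\ psat pi m r psi2 /\
                      forall k, n <= k -> k < m -> psat pi k r psi1
  end.

Definition Tset (I : S -> Prop) : S -> Prop := fun s' => exists s, I s /\ Tr M s s'.
Definition eqclass (s : S) (o : Obs) : S -> Prop := fun s' => sim M o s s'.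

Definition UT (I : S -> Prop) (s' : S) (o : Obs) : S -> Prop :=
  fun x => Tset I x /\ eqclass s' o x.
Definition UD (I : S -> Prop) (s : S) (o' : Obs) : S -> Prop :=
  fun x => I x /\ eqclass s o' x.

Fixpoint UTn (n : nat) (I : S -> Prop) (pi : nat -> S) (o : Obs) : S -> Prop :=
  match n with
  | 0 => I
  | n'.+1 => UT (UTn n' I pi o) (pi n) o
  end.

Definition IS (h : seq S) (r : record) : S -> Prop :=
  fun s => exists h', is_history h' /\ hequiv r h' h /\ hlast h' = s.

Definition ohr (h : seq S) (r : record) : Obs := last (o_init M) (ol r (size h).-1).

Fixpoint isat (s : S) (I : S -> Prop) (o : Obs) (phi : hform Obs) {struct phi} : Prop :=
  match phi with
  | HAtom p => Val M s p
  | HNot phi1 => ~ isat s I o phi1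
  | HAnd phi1 phi2 => isat s I o phi1 /\ isat s I o phi2
  | HA psi => forall pi, is_path pi -> pi 0 = s -> ipsat pi I o psi
  | HK phi1 => forall s', I s' -> isat s' I o phi1
  | HDelta o' phi1 => isat s (UD I s o') o' phi1
  end
with ipsat (pi : nat -> S) (I : S -> Prop) (o : Obs) (psi : pform Obs) {struct psi} : Prop :=
  match psi with
  | PH phi => isat (pi 0) I o phi
  | PNot psi1 => ~ ipsat pi I o psi1
  | PAnd psi1 psi2 => ipsat pi I o psi1 /\ ipsat pi I o psi2
  | PX psi1 => ipsat (suffix_from pi 1) (UT I (pi 1) o) o psi1
  | PU psi1 psi2 => exists n, ipsat (suffix_from pi n) (UTn n I pi o) o psi2 /\
                      forall m, m < n -> ipsat (suffix_from pi m) (UTn m I pi o) o psi1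
  end.

End Semantics.

(* Main.v *)
From Stdlib Require Import FunctionalExtensionality PropExtensionality.
Require Import Defs.
From mathcomp Require Import all_boot zify.
Set Implicit Arguments. Unset Strict Implicit. Unset Printing Implicit Defensive.

Section Aux.
Variables (Obs : finType) (M : model Obs).
Local Notation S := (St M).

Lemma hequiv_sym (r : record Obs) (h h' : seq S) : hequiv r h h' -> hequiv r h' h.
Proof.
case=> Hs H; split=> // i; rewrite -Hs => Hi o Ho; apply: sim_sym; exact: H.
Qed.

Lemma hequiv_trans (r : record Obs) (h1 h2 h3 : seq S) :
  hequiv r h1 h2 -> hequiv r h2 h3 -> hequiv r h1 h3.
Proof.
case=> Hs1 H1 [Hs2 H2]; split; first by rewrite Hs1.
move=> i Hi o Ho; apply: sim_trans (H1 i Hi o Ho) _; apply: H2 => //; by rewrite -Hs1.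
Qed.

Lemma IS_hequiv (r : record Obs) (h h' : seq S) : hequiv r h h' -> IS h r = IS h' r.
Proof.
move=> E; apply: functional_extensionality => s; apply: propositional_extensionality.
split; case=> h0 [Hh [E0 L]]; exists h0; (split; [done | split; [| done]]).
- exact: hequiv_trans E0 E.
- exact: hequiv_trans E0 (hequiv_sym E).
Qed.

Lemma ohr_size (r : record Obs) (h h' : seq S) : size h = size h' -> ohr h r = ohr h' r.
Proof. by rewrite /ohr => ->. Qed.

Lemma obs_at_rcons (r : record Obs) o n m :
  obs_at (rcons r (o, n)) m = if n == m then rcons (obs_at r m) o else obs_at r m.
Proof.
rewrite /obs_at filter_rcons /=; case: (n == m) => //; by rewrite map_rcons.
Qed.

Lemma ol_rcons_lt (r : record Obs) o n i : i < n -> ol M (rcons r (o, n)) i = ol M r i.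
Proof.
elim: i => [|i IH] Hi /=.
- rewrite obs_at_rcons; case: eqP => // E; lia.
- rewrite IH; last lia. rewrite obs_at_rcons; case: eqP => // E; lia.
Qed.

Lemma ol_rcons_eq (r : record Obs) o n : ol M (rcons r (o, n)) n = rcons (ol M r n) o.
Proof.
case: n => [|n] /=; rewrite obs_at_rcons eqxx //.
by rewrite ol_rcons_lt.
Qed.

Lemma stops_rcons (r : record Obs) o n : stops_at r n -> stops_at (rcons r (o, n)) n.
Proof.
move=> H m Hm; rewrite obs_at_rcons; case: eqP => E; first lia. exact: H.
Qed.

Lemma hlast_nth (h : seq S) : hlast h = hnth h (size h).-1.
Proof. by rewrite /hlast /hnth nth_last. Qed.

Lemma hequiv_delta (r : record Obs) o (h h' : seq S) :
  size h = (size h).-1.+1 ->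
  hequiv (rcons r (o, (size h).-1)) h' h <->
  hequiv r h' h /\ sim M o (hnth h' (size h).-1) (hnth h (size h).-1).
Proof.
move=> Hs; split.
- case=> Hs' H; split.
  + split=> // i Hi o' Ho'; apply: H => //.
    have [Hlt|Hge] := ltnP i (size h).-1; first by rewrite ol_rcons_lt.
    have Ei : i = (size h).-1 by lia.
    subst i; by rewrite ol_rcons_eq mem_rcons in_cons Ho' orbT.
  + apply: H; first lia. by rewrite ol_rcons_eq mem_rcons mem_head.
- case=> [[Hs' H] Ho]; split=> // i Hi o'.
  have [Hlt|Hge] := ltnP i (size h).-1; first by rewrite ol_rcons_lt //; apply: H.
  have Ei : i = (size h).-1 by lia.
  subst i; rewrite ol_rcons_eq mem_rcons in_cons => /orP [/eqP -> //|Ho'].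
  exact: H.
Qed.

Lemma IS_delta (r : record Obs) o (h : seq S) :
  h <> [::] ->
  IS h (rcons r (o, (size h).-1)) = UD (IS h r) (hlast h) o.
Proof.
move=> Hne.
have Hs : size h = (size h).-1.+1 by case: h Hne.
apply: functional_extensionality => s; apply: propositional_extensionality.
rewrite /UD /eqclass; split.
- case=> h' [Hh [/(hequiv_delta _ _ _ Hs) [E Ho] L]]; split.
  + by exists h'.
  + rewrite hlast_nth -L hlast_nth; case: E => Hs' _; rewrite Hs'.
    exact: sim_sym.
- case=> [[h' [Hh [E L]]] Ho]; exists h'; split=> //; split=> //.
  apply/(hequiv_delta _ _ _ Hs); split=> //.
  case: (E) => Hs' _; move: Ho; rewrite -L !hlast_nth -Hs' => Ho.
  exact: sim_sym.
Qed.

Lemma ohr_delta (r : record Obs) o (h : seq S) :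
  ohr h (rcons r (o, (size h).-1)) = o.
Proof. by rewrite /ohr ol_rcons_eq last_rcons. Qed.

End Aux.
Section Aux2.
Variables (Obs : finType) (M : model Obs).
Local Notation S := (St M).

Lemma hnth_rcons_lt (h : seq S) x i : i < size h -> hnth (rcons h x) i = hnth h i.
Proof. by move=> Hi; rewrite /hnth nth_rcons Hi. Qed.

Lemma hnth_rcons_eq (h : seq S) x : hnth (rcons h x) (size h) = x.
Proof. by rewrite /hnth nth_rcons ltnn eqxx. Qed.

Lemma hlast_rcons (h : seq S) x : hlast (rcons h x) = x.
Proof. by rewrite /hlast last_rcons. Qed.

Lemma hist_rcons (h : seq S) x : h <> [::] ->
  is_history (rcons h x) <-> is_history h /\ Tr M (hlast h) x.
Proof.
move=> Hne; have Hs : size h = (size h).-1.+1 by case: h Hne.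
split.
- case=> _ H; split.
  + split=> // i Hi; have := H i; rewrite !hnth_rcons_lt //; last lia.
    apply; rewrite size_rcons; lia.
  + rewrite hlast_nth -(hnth_rcons_lt x); last lia.
    have := H (size h).-1; rewrite -Hs hnth_rcons_eq; apply; rewrite size_rcons; lia.
- case=> [[_ H] Ht]; split; first by move=> /(f_equal size); rewrite size_rcons.
  move=> i; rewrite size_rcons => Hi.
  have [Hlt|Hge] := ltnP i.+1 (size h).
  + rewrite (hnth_rcons_lt _ Hlt) (hnth_rcons_lt _ (ltnW Hlt)); exact: H.
  + have Ei : i = (size h).-1 by lia.
    subst i; rewrite -Hs hnth_rcons_eq hnth_rcons_lt; last lia.
    by rewrite -hlast_nth.
Qed.

Lemma ol_succ (r : record Obs) (h : seq S) : h <> [::] -> obs_at r (size h) = [::] ->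
  ol M r (size h) = [:: ohr h r].
Proof. by case: h => // a h _ /= ->. Qed.

Lemma IS_step (r : record Obs) (h : seq S) s' : h <> [::] -> obs_at r (size h) = [::] ->
  IS (rcons h s') r = UT (IS h r) s' (ohr h r).
Proof.
move=> Hne Hobs; have Hol := ol_succ Hne Hobs.
apply: functional_extensionality => s; apply: propositional_extensionality.
rewrite /UT /Tset /eqclass; split.
- case=> h' [Hh [[Hs E] L]].
  case/lastP: h' Hh Hs E L => [|h'' x] Hh Hs E L.
  + by move: Hs; rewrite size_rcons.
  + move: Hs; rewrite !size_rcons => /eqP; rewrite eqSS => /eqP Hs.
    have Hne'' : h'' <> [::] by move=> E0; apply: Hne; apply/size0nil; rewrite -Hs E0.
    move/(hist_rcons _ Hne''): Hh => [Hh'' Ht].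
    rewrite hlast_rcons in L; subst x.
    split.
    * exists (hlast h''); split=> //.
      exists h''; split=> //; split=> //; split=> // i Hi o Ho.
      rewrite -(hnth_rcons_lt s Hi) -(hnth_rcons_lt s' (_ : i < size h)); last by rewrite -Hs.
      apply: E => //; rewrite size_rcons; lia.
    * apply: sim_sym.
      have H1 : size h'' < size (rcons h'' s) by rewrite size_rcons.
      have := E _ H1 (ohr h r).
      rewrite hnth_rcons_eq Hs hnth_rcons_eq Hol mem_head; by apply.
- case=> [[s0 [[h'' [Hh [[Hs E] L]]] Ht]] Hsim].
  have Hne'' : h'' <> [::] by move=> E0; apply: Hne; apply/size0nil; rewrite -Hs E0.
  exists (rcons h'' s); split; first by apply/hist_rcons => //; rewrite L.
  split; last exact: hlast_rcons.
  split; first by rewrite !size_rcons Hs.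
  move=> i; rewrite size_rcons => Hi o Ho.
  have [Hlt|Hge] := ltnP i (size h'').
  + rewrite !hnth_rcons_lt -?Hs //; exact: E.
  + have Ei : i = size h'' by lia.
    subst i; rewrite hnth_rcons_eq Hs hnth_rcons_eq.
    move: Ho; rewrite Hs Hol mem_seq1 => /eqP ->; exact: sim_sym.
Qed.

Lemma ohr_step (r : record Obs) (h : seq S) s' : h <> [::] -> obs_at r (size h) = [::] ->
  ohr (rcons h s') r = ohr h r.
Proof.
move=> Hne Hobs; rewrite {1}/ohr size_rcons /= ol_succ //.
Qed.

End Aux2.
Section Aux3.
Variables (Obs : finType) (M : model Obs).
Local Notation S := (St M).
Implicit Types (pi : nat -> S) (r : record Obs).

Lemma size_pf pi n : size (prefix_upto pi n) = n.+1.
Proof. exact: size_mkseq. Qed.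

Lemma pf_ne pi n : prefix_upto pi n <> [::].
Proof. by move=> /(f_equal size); rewrite size_pf. Qed.

Lemma pf_S pi n : prefix_upto pi n.+1 = rcons (prefix_upto pi n) (pi n.+1).
Proof. exact: mkseqS. Qed.

Lemma hnth_pf pi n i : i < n.+1 -> hnth (prefix_upto pi n) i = pi i.
Proof. by move=> Hi; rewrite /hnth /prefix_upto nth_mkseq. Qed.

Lemma hlast_pf pi n : hlast (prefix_upto pi n) = pi n.
Proof. by rewrite hlast_nth size_pf hnth_pf. Qed.

Lemma pf_hist pi n : is_path pi -> is_history (prefix_upto pi n).
Proof.
move=> Hp; split; first exact: pf_ne.
move=> i; rewrite size_pf => Hi; rewrite (hnth_pf _ Hi) (hnth_pf _ (ltnW Hi)); exact: Hp.
Qed.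

Lemma stops_pf r pi n : stops_at r n -> stops_at_hist r (prefix_upto pi n).
Proof. by rewrite /stops_at_hist size_pf. Qed.

Lemma stops_mono r n m : n <= m -> stops_at r n -> stops_at r m.
Proof. move=> Hnm H k Hk; apply: H; exact: leq_ltn_trans Hnm Hk. Qed.

Lemma step_path r pi n : stops_at r n ->
  IS (prefix_upto pi n.+1) r = UT (IS (prefix_upto pi n) r) (pi n.+1) (ohr (prefix_upto pi n) r)
  /\ ohr (prefix_upto pi n.+1) r = ohr (prefix_upto pi n) r.
Proof.
move=> Hr; have Hobs : obs_at r (size (prefix_upto pi n)) = [::] by rewrite size_pf; apply: Hr.
rewrite pf_S; split; [apply: IS_step | apply: ohr_step]; by [exact: pf_ne | ].
Qed.

Lemma UTn_path r pi n : stops_at r n -> forall k,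
  UTn k (IS (prefix_upto pi n) r) (suffix_from pi n) (ohr (prefix_upto pi n) r)
    = IS (prefix_upto pi (n + k)) r
  /\ ohr (prefix_upto pi (n + k)) r = ohr (prefix_upto pi n) r.
Proof.
move=> Hr; elim=> [|k [IH1 IH2]]; first by rewrite addn0.
have Hr' : stops_at r (n + k) by apply: stops_mono Hr; exact: leq_addr.
have [E1 E2] := step_path pi Hr'.
rewrite /= IH1 -IH2 /suffix_from !addnS.
by rewrite E1 E2 IH2.
Qed.

Lemma sf_sf pi n k : suffix_from (suffix_from pi n) k = suffix_from pi (n + k).
Proof. by apply: functional_extensionality => i; rewrite /suffix_from addnA. Qed.

Lemma pf_of_prefix (h : seq S) pi n : size h = n.+1 -> hprefix h pi -> prefix_upto pi n = h.
Proof.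
move=> Hs Hp; apply: (@eq_from_nth _ (s_init M)); first by rewrite size_pf Hs.
move=> i; rewrite size_pf => Hi; rewrite -/(hnth _ i) hnth_pf // -/(hnth _ i); apply: Hp.
by rewrite Hs.
Qed.

End Aux3.
Scheme hform_mut := Induction for hform Sort Prop
  with pform_mut := Induction for pform Sort Prop.
Combined Scheme form_mut from hform_mut, pform_mut.

Section Main.
Variables (Obs : finType) (M : model Obs).
Local Notation S := (St M).

Definition Ph (phi : hform Obs) := forall (h : seq S) (r : record Obs),
  is_history h -> stops_at_hist r h ->
  (hsat h r phi <-> isat (hlast h) (IS h r) (ohr h r) phi).

Definition Pp (psi : pform Obs) := forall (pi : nat -> S) n (r : record Obs),
  is_path pi -> stops_at r n ->
  (psat pi n r psi <->
   ipsat (suffix_from pi n) (IS (prefix_upto pi n) r) (ohr (prefix_upto pi n) r) psi).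

Lemma main_mut : (forall phi, Ph phi) /\ (forall psi, Pp psi).
Proof.
apply: form_mut.
- by move=> p h r _ _.
- move=> phi IH h r Hh Hr /=; have := IH h r Hh Hr; tauto.
- move=> phi1 IH1 phi2 IH2 h r Hh Hr /=.
  have := IH1 h r Hh Hr; have := IH2 h r Hh Hr; tauto.
-
  move=> psi IH h r Hh Hr /=.
  have Hne := proj1 Hh.
  move En: (size h).-1 => n.
  have Hs : size h = n.+1 by rewrite -En; case: (h) Hne.
  rewrite /stops_at_hist En in Hr.
  split.
  + move=> H pi' Hp' H0.
    pose pi := fun i => if i < n then hnth h i else pi' (i - n).
    have Hp : is_path pi.
      move=> i; rewrite /pi; case: ifP => A; case: ifP => B.
      * apply: (proj2 Hh); rewrite Hs; lia.
      * have Ei : n = i.+1 by lia.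
        rewrite Ei subnn H0 hlast_nth Hs /= Ei; apply: (proj2 Hh); rewrite Hs; lia.
      * lia.
      * rewrite subSn; last lia. exact: Hp'.
    have Hpre : hprefix h pi.
      move=> i; rewrite Hs /pi => Hi; case: ifP => A //.
      have Ei : i = n by lia.
      by subst i; rewrite subnn H0 hlast_nth Hs.
    have := H pi Hp Hpre; move/(IH pi n r Hp Hr); rewrite (pf_of_prefix Hs Hpre).
    have -> : suffix_from pi n = pi'.
      apply: functional_extensionality => i; rewrite /suffix_from /pi.
      case: ifP => A; first lia. by rewrite addKn.
    done.
  + move=> H pi Hp Hpre; apply/(IH pi n r Hp Hr); rewrite (pf_of_prefix Hs Hpre).
    apply: H.
    * by move=> i; rewrite /suffix_from addnS; apply: Hp.
    * rewrite /suffix_from addn0 hlast_nth Hs /=; apply: Hpre; rewrite Hs.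
      exact: ltnSn.
-
  move=> phi IH h r Hh Hr /=; split.
  + move=> H s' [h' [Hh' [E L]]].
    have Hr' : stops_at_hist r h' by rewrite /stops_at_hist (proj1 E).
    have := H h' Hh' E; move/(IH h' r Hh' Hr').
    by rewrite (IS_hequiv E) /ohr (proj1 E) L.
  + move=> H h' Hh' E.
    have Hr' : stops_at_hist r h' by rewrite /stops_at_hist (proj1 E).
    apply/(IH h' r Hh' Hr'); rewrite (IS_hequiv E) /ohr (proj1 E).
    apply: H; by exists h'.
-
  move=> o phi IH h r Hh Hr /=.
  have Hr' : stops_at_hist (rcons r (o, (size h).-1)) h by apply: stops_rcons.
  apply: iff_trans (IH h _ Hh Hr') _.
  by rewrite IS_delta ?ohr_delta //; case: Hh.
-
  move=> phi IH pi n r Hp Hr /=.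
  apply: iff_trans (IH _ r (pf_hist n Hp) (@stops_pf _ _ r pi n Hr)) _.
  by rewrite hlast_pf /suffix_from addn0.
- move=> psi IH pi n r Hp Hr /=; have := IH pi n r Hp Hr; tauto.
- move=> psi1 IH1 psi2 IH2 pi n r Hp Hr /=.
  have := IH1 pi n r Hp Hr; have := IH2 pi n r Hp Hr; tauto.
-
  move=> psi IH pi n r Hp Hr /=.
  apply: iff_trans (IH pi n.+1 r Hp (stops_mono (leqnSn n) Hr)) _.
  have [E1 E2] := step_path pi Hr.
  rewrite E1 E2 sf_sf addn1.
  have -> : suffix_from pi n 1 = pi n.+1 by rewrite /suffix_from addn1.
  done.
-
  move=> psi1 IH1 psi2 IH2 pi n r Hp Hr /=.
  have key : forall psi, Pp psi -> forall k,
    ipsat (suffix_from (suffix_from pi n) k)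
      (UTn k (IS (prefix_upto pi n) r) (suffix_from pi n) (ohr (prefix_upto pi n) r))
      (ohr (prefix_upto pi n) r) psi <-> psat pi (n + k) r psi.
    move=> psi IH k; have [E1 E2] := UTn_path pi Hr k.
    rewrite sf_sf E1 -E2; apply: iff_sym; apply: IH => //.
    apply: stops_mono Hr; exact: leq_addr.
  split.
  + case=> m [Hnm [H2 H1]]; exists (m - n); split.
    * by apply/(key _ IH2); rewrite subnKC.
    * move=> j Hj; apply/(key _ IH1); apply: H1; lia.
  + case=> k [H2 H1]; exists (n + k); split; first exact: leq_addr.
    split; first by apply/(key _ IH2).
    move=> j Hj Hjk; have H := H1 (j - n).
    have := key _ IH1 (j - n); rewrite subnKC // => -[K _]; apply: K; apply: H; lia.
Qed.

End Main.

Theorem mainTheorem2 (Obs : finType) (M : model Obs) (phi : hform Obs)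
    (h : seq (St M)) (r : record Obs) :
  is_history h -> stops_at_hist r h ->
  (hsat h r phi <-> isat (hlast h) (IS h r) (ohr h r) phi).
Proof. exact: (proj1 (main_mut M) phi h r). Qed.
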